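(* Let $(A_i,\omega_i)$, $i=1,2$, be baric algebras over $K$ and let $I$ be a two-sided ideal of $A_1\bowtie A_2$ such that $I_1\neq A_1$. Then $I_1$ is a two-sided ideal of $A_1$ if and only if $I_2\subseteq\operatorname{Ker}\omega_2$.
   Context: A baric algebra over a field $K$ is a pair $(A,\omega)$ where $A$ is a (not necessarily associative) $K$-algebra and $\omega:A\to K$ is a nonzero $K$-algebra homomorphism. For baric algebras $(A_1,\omega_1),(A_2,\omega_2)$, $A_1\bowtie A_2$ denotes the vector space $A_1\oplus A_2$ with product $(a_1,a_2)(b_1,b_2)=(a_1b_1+\omega_2(b_2)a_1,\ a_2b_2+\omega_1(b_1)a_2)$. For a subset $I\subseteq A_1\bowtie A_2$, $I_1=\{a_1\in A_1:\exists a_2\in A_2,\ (a_1,a_2)\in I\}$ and $I_2=\{a_2\in A_2:\exists a_1\in A_1,\ (a_1,a_2)\in I\}$ are its coordinate projections. *)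

(* Defs.v *)
From HB Require Import structures.
From mathcomp Require Import all_boot all_order all_algebra.
Set Implicit Arguments. Unset Strict Implicit. Unset Printing Implicit Defensive.
Import GRing.Theory.
Local Open Scope ring_scope.

Section Baric.
Variable K : fieldType.

Definition bilinear_mul (V : lmodType K) (m : V -> V -> V) : Prop :=
  (forall (a : K) (x y z : V), m (a *: x + y) z = a *: m x z + m y z) /\
  (forall (a : K) (x y z : V), m z (a *: x + y) = a *: m z x + m z y).

Definition baric_weight (V : lmodType K) (m : V -> V -> V) (w : V -> K) : Prop :=
  [/\ forall (a : K) (x y : V), w (a *: x + y) = a * w x + w y,
      forall x y : V, w (m x y) = w x * w y &
      exists x : V, w x != 0].

Definition is_ideal (V : lmodType K) (m : V -> V -> V) (I : V -> Prop) : Prop :=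
  [/\ I 0,
      forall (a : K) (x y : V), I x -> I y -> I (a *: x + y),
      forall x y : V, I x -> I (m y x) &
      forall x y : V, I x -> I (m x y)].

Definition bowtie_mul (A1 A2 : lmodType K) (m1 : A1 -> A1 -> A1) (m2 : A2 -> A2 -> A2)
    (w1 : A1 -> K) (w2 : A2 -> K) (x y : A1 * A2) : A1 * A2 :=
  (m1 x.1 y.1 + w2 y.2 *: x.1, m2 x.2 y.2 + w1 y.1 *: x.2).

Definition proj1_set (A1 A2 : Type) (I : A1 * A2 -> Prop) : A1 -> Prop :=
  fun a1 => exists a2, I (a1, a2).
Definition proj2_set (A1 A2 : Type) (I : A1 * A2 -> Prop) : A2 -> Prop :=
  fun a2 => exists a1, I (a1, a2).

End Baric.

(* Main.v *)
Require Import Defs.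
From HB Require Import structures.
From mathcomp Require Import all_boot all_order all_algebra.
Import GRing.Theory.
Local Open Scope ring_scope.

Lemma m0l (K : fieldType) (V : lmodType K) (m : V -> V -> V) :
  bilinear_mul m -> forall z, m 0 z = 0.
Proof.
case=> h _ z; have := h 1 0 0 z; rewrite !scale1r addr0 => H.
by apply: (@addrI _ (m 0 z)); rewrite addr0 -H.
Qed.

Lemma m0r (K : fieldType) (V : lmodType K) (m : V -> V -> V) :
  bilinear_mul m -> forall z, m z 0 = 0.
Proof.
case=> _ h z; have := h 1 0 0 z; rewrite !scale1r addr0 => H.
by apply: (@addrI _ (m z 0)); rewrite addr0 -H.
Qed.

Lemma w0 (K : fieldType) (V : lmodType K) (m : V -> V -> V) (w : V -> K) :
  baric_weight m w -> w 0 = 0.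
Proof.
case=> h _ _; have := h 1 0 0; rewrite scale1r addr0 mul1r => H.
by apply: (@addrI _ (w 0)); rewrite addr0 -H.
Qed.

Theorem proposition5p2 (K : fieldType) (A1 A2 : lmodType K)
  (m1 : A1 -> A1 -> A1) (m2 : A2 -> A2 -> A2)
  (hm1 : bilinear_mul m1) (hm2 : bilinear_mul m2)
  (w1 : A1 -> K) (w2 : A2 -> K)
  (hw1 : baric_weight m1 w1) (hw2 : baric_weight m2 w2)
  (I : A1 * A2 -> Prop)
  (hI : is_ideal (bowtie_mul m1 m2 w1 w2) I)
  (hI1 : ~ (forall a1 : A1, proj1_set I a1)) :
  is_ideal m1 (proj1_set I) <-> (forall a2 : A2, proj2_set I a2 -> w2 a2 = 0).
Proof.
have [I0 Ilin Il Ir] := hI.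
have P1lin : forall (a : K) x y, proj1_set I x -> proj1_set I y ->
    proj1_set I (a *: x + y).
  move=> a x y [x2 Hx] [y2 Hy]; exists (a *: x2 + y2).
  exact: (Ilin a _ _ Hx Hy).
split.
- move=> [J0 Jlin Jl Jr] a2 [a1 Ha] ; apply/eqP; apply/negP => Hw.
  apply: hI1 => y.
  have H1 := Il _ (y, 0) Ha; rewrite /bowtie_mul /= in H1.
  have H2 : proj1_set I (m1 y a1 + w2 a2 *: y) by exists (m2 0 a2 + w1 a1 *: 0).
  have H3 : proj1_set I (m1 y a1) by apply: Jl; exists a2.
  have H4 := Jlin (-1) _ _ H3 H2.
  rewrite scaleN1r addrA addNr add0r in H4.
  have Hw' : w2 a2 != 0 by apply/negP.
  have H5 := Jlin (w2 a2)^-1 _ _ H4 J0.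
  by rewrite addr0 scalerA mulVf // scale1r in H5.
- move=> Hw; split => //.
  + by exists 0.
  + move=> x y [x2 Hx]; exists (m2 0 x2 + w1 x *: 0).
    have H := Il _ (y, 0) Hx; rewrite /bowtie_mul /= in H.
    have Hx2 : w2 x2 = 0 by apply: Hw; exists x.
    by rewrite Hx2 scale0r addr0 in H.
  + move=> x y [x2 Hx]; exists (m2 x2 0 + w1 y *: x2).
    have H := Ir _ (y, 0) Hx; rewrite /bowtie_mul /= in H.
    have W0 : w2 0 = 0 := @w0 K A2 m2 w2 hw2.
    by rewrite W0 scale0r addr0 in H.
Qed.
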